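(* Let $\rho$ be a 2-qubit pure state whose Bloch representation has the form $\boldsymbol{\alpha}=O_1(\mu,0,0)^T$, $\boldsymbol{\beta}=O_2(\mu,0,0)^T$, $C=O_1\,\mathrm{diag}(1,\sin\theta,-\sin\theta)\,O_2^T$, with $\theta\in[0,\pi/2]$, $\mu=\cos\theta$, $O_1,O_2\in SO(3)$, and suppose $|\mu|\in(0,1)$. Then $I_{\chi^2,post}(\rho)<2$.
   Context: Let $\sigma_1,\sigma_2,\sigma_3$ be the Pauli matrices. For a 2-qubit density matrix $\rho$ its Bloch vector is $(b_1,\dots,b_{16})$, where $b_1=1$; $(b_2,b_3,b_4)=\boldsymbol{\alpha}$ with $\alpha_j=\operatorname{tr}((\sigma_j\otimes I)\rho)$; $(b_5,b_6,b_7)=\boldsymbol{\beta}$ with $\beta_j=\operatorname{tr}((I\otimes\sigma_j)\rho)$; and $(b_8,\dots,b_{16})$ are the entries $C_{jk}=\operatorname{tr}((\sigma_j\otimes\sigma_k)\rho)$ of the $3\times3$ matrix $C$ in row-major order. Every 2-qubit pure state has a Bloch representation of the displayed form. For $b\in[-1,1]$ and $h\in(-1,1)$, $D_{\chi^2}(b,h)=\frac{((b+1)/2)^2}{(h+1)/2}+\frac{((1-b)/2)^2}{(1-h)/2}-1$; if $h=\pm1$ and $b=h$, set $D_{\chi^2}(b,h)=0$. The posterior information content of a pure state with Bloch vector $(b_1,\dots,b_{16})$ is defined as follows. For $i=2,\dots,16$, let $b_i^{max}$ and $b_i^{min}$ be the maximum and the minimum of the $i$-th Bloch component over all 2-qubit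 pure states whose components $1,\dots,i-1$ equal $b_1,\dots,b_{i-1}$, and let $h_i=(b_i^{max}+b_i^{min})/2$. Then $I_{\chi^2,post}=\sum_{i=2}^{16}D_{\chi^2}(b_i,h_i)$. *)

(* Defs.v *)
From HB Require Import structures.
From mathcomp Require Import all_boot all_order all_algebra.
From mathcomp Require Import complex mxtens.
From mathcomp Require Import boolp classical_sets reals trigo.
Set Implicit Arguments. Unset Strict Implicit. Unset Printing Implicit Defensive.
Import Order.TTheory GRing.Theory Num.Theory.
Local Open Scope ring_scope.
Local Open Scope classical_set_scope.

Section Defs.
Variable R : realType.

Definition sigma (a : nat) : 'M[R[i]]_2 :=
  match a with
  | 0 => 1%:M
  | 1 => \matrix_(i < 2, j < 2) (if i != j then 1 else 0)
  | 2 => \matrix_(i < 2, j < 2)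
           (if i == j then 0 else if i == 0 :> nat then - 'i%C else 'i%C)
  | _ => \matrix_(i < 2, j < 2)
           (if i == j then (if i == 0 :> nat then 1 else -1) else 0)
  end.

Definition adj {m n} (A : 'M[R[i]]_(m, n)) : 'M[R[i]]_(n, m) :=
  (map_mx (@conjc R) A)^T.

Definition pure2 (rho : 'M[R[i]]_(2 * 2)) : Prop :=
  exists psi : 'cV[R[i]]_(2 * 2), adj psi *m psi = 1 /\ rho = psi *m adj psi.

(* 1-based Bloch index k -> pair (a,b) with observable sigma a (x) sigma b:
   1 -> I(x)I ; 2,3,4 -> sigma_j (x) I ; 5,6,7 -> I (x) sigma_j ;
   8..16 -> sigma_j (x) sigma_k, row-major in (j,k). *)
Definition bloch_pair (k : nat) : nat * nat :=
  if (k <= 1)%N then (0%N, 0%N)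
  else if (k <= 4)%N then ((k - 1)%N, 0%N)
  else if (k <= 7)%N then (0%N, (k - 4)%N)
  else ((1 + (k - 8) %/ 3)%N, (1 + (k - 8) %% 3)%N).

(* k-th Bloch component (k = 1..16): tr((sigma_a (x) sigma_b) rho), which is
   real for Hermitian rho; we take its real part. *)
Definition bloch (rho : 'M[R[i]]_(2 * 2)) (k : nat) : R :=
  @complex.Re R (\tr ((sigma (bloch_pair k).1 *t sigma (bloch_pair k).2) *m rho)).

Definition cond_values (b : nat -> R) (i : nat) : set R :=
  [set bloch rho i | rho in [set rho | pure2 rho /\
      forall k, (1 <= k < i)%N -> bloch rho k = b k]].

Definition bmax (b : nat -> R) (i : nat) : R := sup (cond_values b i).
Definition bmin (b : nat -> R) (i : nat) : R := inf (cond_values b i).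
Definition hmid (b : nat -> R) (i : nat) : R := (bmax b i + bmin b i) / 2.

(* chi^2 divergence; for h = +-1 (then necessarily b = h) it is 0 *)
Definition Dchi2 (b h : R) : R :=
  if (-1 < h) && (h < 1) then
    ((b + 1) / 2) ^+ 2 / ((h + 1) / 2) + ((1 - b) / 2) ^+ 2 / ((1 - h) / 2) - 1
  else 0.

Definition Ipost (b : nat -> R) : R :=
  \sum_(2 <= i < 17) Dchi2 (b i) (hmid b i).

Definition SO3 (O : 'M[R]_3) : Prop := O^T *m O = 1%:M /\ \det O = 1.

End Defs.

(* Main.v *)
Require Import Defs.
From HB Require Import structures.
From mathcomp Require Import all_boot all_order all_algebra.
From mathcomp Require Import complex mxtens.
From mathcomp Require Import boolp classical_sets reals trigo.
From mathcomp Require Import ring lra zify.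
Import Order.TTheory GRing.Theory Num.Theory.
Local Open Scope ring_scope.

Set Implicit Arguments. Unset Strict Implicit. Unset Printing Implicit Defensive.

Section Main.
Variable R : realType.
Local Open Scope classical_set_scope.
Implicit Types x y : R[i].

Lemma cReM x y : complex.Re (x*y) = complex.Re x * complex.Re y - complex.Im x * complex.Im y.
Proof. by case: x => a b; case: y => c d. Qed.

Lemma tr_pure (M : 'M[R[i]]_(2*2)) (psi : 'cV[R[i]]_(2*2)) :
  \tr (M *m (psi *m adj psi)) = \sum_i \sum_j M i j * (psi j 0 * (psi i 0)^*)%C.
Proof.
rewrite /mxtrace; apply: eq_bigr => i _; rewrite mxE; apply: eq_bigr => j _.
by rewrite mxE big_ord1 !mxE.
Qed.

Record st := St { a0 : R; a1 : R; a2 : R; a3 : R; b0 : R; b1 : R; b2 : R; b3 : R }.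
Definition bc (v : st) (k : nat) : R :=
  let: St a0 a1 a2 a3 b0 b1 b2 b3 := v in
  match k with
  | 1 => (a0^+2 + a1^+2 + a2^+2 + a3^+2 + b0^+2 + b1^+2 + b2^+2 + b3^+2)
  | 2 => (2*a0*a2 + 2*a1*a3 + 2*b0*b2 + 2*b1*b3)
  | 3 => (2*a0*b2 + 2*a1*b3 - 2*a2*b0 - 2*a3*b1)
  | 4 => (a0^+2 + a1^+2 - a2^+2 - a3^+2 + b0^+2 + b1^+2 - b2^+2 - b3^+2)
  | 5 => (2*a0*a1 + 2*a2*a3 + 2*b0*b1 + 2*b2*b3)
  | 6 => (2*a0*b1 - 2*a1*b0 + 2*a2*b3 - 2*a3*b2)
  | 7 => (a0^+2 - a1^+2 + a2^+2 - a3^+2 + b0^+2 - b1^+2 + b2^+2 - b3^+2)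
  | 8 => (2*a0*a3 + 2*a1*a2 + 2*b0*b3 + 2*b1*b2)
  | 9 => (2*a0*b3 - 2*a1*b2 + 2*a2*b1 - 2*a3*b0)
  | 10 => (2*a0*a2 - 2*a1*a3 + 2*b0*b2 - 2*b1*b3)
  | 11 => (2*a0*b3 + 2*a1*b2 - 2*a2*b1 - 2*a3*b0)
  | 12 => (- 2*a0*a3 + 2*a1*a2 - 2*b0*b3 + 2*b1*b2)
  | 13 => (2*a0*b2 - 2*a1*b3 - 2*a2*b0 + 2*a3*b1)
  | 14 => (2*a0*a1 - 2*a2*a3 + 2*b0*b1 - 2*b2*b3)
  | 15 => (2*a0*b1 - 2*a1*b0 - 2*a2*b3 + 2*a3*b2)
  | 16 => (a0^+2 - a1^+2 - a2^+2 + a3^+2 + b0^+2 - b1^+2 - b2^+2 + b3^+2)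
  | _ => 0 end.

Definition psi_of (v : st) : 'cV[R[i]]_(2*2) :=
  \col_(p < 2*2) (match val p with 0 => a0 v +i* b0 v | 1 => a1 v +i* b1 v
      | 2 => a2 v +i* b2 v | _ => a3 v +i* b3 v end)%C.

Definition st_of (psi : 'cV[R[i]]_(2*2)) : st :=
  St (complex.Re (psi ord0 0)) (complex.Re (psi (lift ord0 ord0) 0))
     (complex.Re (psi (lift ord0 (lift ord0 ord0)) 0))
     (complex.Re (psi (lift ord0 (lift ord0 (lift ord0 ord0))) 0))
     (complex.Im (psi ord0 0)) (complex.Im (psi (lift ord0 ord0) 0))
     (complex.Im (psi (lift ord0 (lift ord0 ord0)) 0))
     (complex.Im (psi (lift ord0 (lift ord0 (lift ord0 ord0))) 0)).

Lemma st_ofK v : st_of (psi_of v) = v.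
Proof. by case: v => *; rewrite /st_of /psi_of !mxE. Qed.

Lemma bloch_st psi k : (1 <= k <= 16)%N -> bloch (psi *m adj psi) k = bc (st_of psi) k.
Proof.
case/andP=> hk1 hk2; rewrite /bloch tr_pure !big_ord_recl !big_ord0 /st_of.
move: (psi ord0 0) (psi (lift ord0 ord0) 0) (psi (lift ord0 (lift ord0 ord0)) 0)
  (psi (lift ord0 (lift ord0 (lift ord0 ord0))) 0) => [p0 q0] [p1 q1] [p2 q2] [p3 q3].
case: k hk1 hk2 => [//|k] _ hk.
do 16 (case: k hk => [_|k hk]; [by rewrite /= !mxE /=; ring|]).
by [].
Qed.

Lemma norm_st psi : adj psi *m psi = 1 -> bc (st_of psi) 1 = 1.
Proof.
move/matrixP=> /(_ 0 0); rewrite !mxE !big_ord_recl big_ord0 /st_of !mxE /=.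
move: (psi ord0 0) (psi (lift ord0 ord0) 0) (psi (lift ord0 (lift ord0 ord0)) 0)
  (psi (lift ord0 (lift ord0 (lift ord0 ord0))) 0) => [p0 q0] [p1 q1] [p2 q2] [p3 q3].
move=> /(congr1 (@complex.Re R)) /= <-; ring.
Qed.

Lemma psi_of_norm v : bc v 1 = 1 -> adj (psi_of v) *m psi_of v = 1.
Proof.
case: v => p0 p1 p2 p3 q0 q1 q2 q3 /= h.
apply/matrixP=> i j; rewrite !ord1 !mxE !big_ord_recl big_ord0 !mxE /=.
apply/eqP; rewrite eq_complex /=; apply/andP; split; apply/eqP.
  by rewrite -h; ring.
ring.
Qed.

End Main.

Lemma det33 (R : comNzRingType) (A : 'M[R]_3) : \det A =
  A 0 0 * (A 1 1 * A 2 2 - A 1 2 * A 2 1) - A 0 1 * (A 1 0 * A 2 2 - A 1 2 * A 2 0)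
  + A 0 2 * (A 1 0 * A 2 1 - A 1 1 * A 2 0).
Proof.
rewrite (expand_det_row _ 0) !big_ord_recl big_ord0 /cofactor.
rewrite !(expand_det_row _ 0) !big_ord_recl !big_ord0 /cofactor !det_mx11 !mxE /=.
pose g (i j : nat) := A (inord i) (inord j).
pose h (i j : nat) := A (inord i) (inord j).
have Ag : forall i j, A i j = g i j by move=> i j; rewrite /g !inord_val.
rewrite !Ag.
repeat match goal with |- context [g ?i ?j] =>
  let i' := eval vm_compute in i in let j' := eval vm_compute in j in
  change (g i j) with (h i' j') end.
rewrite ?add0n ?addn0 ?addn1 ?expr0 ?expr1 ?sqrrN1.
rewrite /h; ring.
Qed.

Section B.
Variable R : realType.
Local Open Scope classical_set_scope.
Local Notation st := (st R).

Lemma bc_bound (v : st) (k : nat) : (2 <= k <= 16)%N -> - bc v 1 <= bc v k <= bc v 1.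
Proof.
case: v => a0 a1 a2 a3 b0 b1 b2 b3.
case: k => [//|[//|k]] /andP[_ hk] /=.
case: k hk => [_|k hk].
  have E1 : 2 * (bc (St a0 a1 a2 a3 b0 b1 b2 b3) 1 - bc (St a0 a1 a2 a3 b0 b1 b2 b3) 2) = (a0 - a2)^+2 + (b0 - b2)^+2 + (a1 - a3)^+2 + (b1 - b3)^+2 + (- a0 + a2)^+2 + (- b0 + b2)^+2 + (- a1 + a3)^+2 + (- b1 + b3)^+2 by rewrite /=; ring.
  have E2 : 2 * (bc (St a0 a1 a2 a3 b0 b1 b2 b3) 1 + bc (St a0 a1 a2 a3 b0 b1 b2 b3) 2) = (a0 + a2)^+2 + (b0 + b2)^+2 + (a1 + a3)^+2 + (b1 + b3)^+2 + (a0 + a2)^+2 + (b0 + b2)^+2 + (a1 + a3)^+2 + (b1 + b3)^+2 by rewrite /=; ring.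
  have P1 : 0 <= (a0 - a2)^+2 + (b0 - b2)^+2 + (a1 - a3)^+2 + (b1 - b3)^+2 + (- a0 + a2)^+2 + (- b0 + b2)^+2 + (- a1 + a3)^+2 + (- b1 + b3)^+2 by rewrite !addr_ge0 ?sqr_ge0.
  have P2 : 0 <= (a0 + a2)^+2 + (b0 + b2)^+2 + (a1 + a3)^+2 + (b1 + b3)^+2 + (a0 + a2)^+2 + (b0 + b2)^+2 + (a1 + a3)^+2 + (b1 + b3)^+2 by rewrite !addr_ge0 ?sqr_ge0.
  move: E1 E2 P1 P2; rewrite /= => E1 E2 P1 P2; apply/andP; split; lra.
case: k hk => [_|k hk].
  have E1 : 2 * (bc (St a0 a1 a2 a3 b0 b1 b2 b3) 1 - bc (St a0 a1 a2 a3 b0 b1 b2 b3) 3) = (a0 - b2)^+2 + (a2 + b0)^+2 + (a1 - b3)^+2 + (a3 + b1)^+2 + (a2 + b0)^+2 + (- a0 + b2)^+2 + (a3 + b1)^+2 + (- a1 + b3)^+2 by rewrite /=; ring.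
  have E2 : 2 * (bc (St a0 a1 a2 a3 b0 b1 b2 b3) 1 + bc (St a0 a1 a2 a3 b0 b1 b2 b3) 3) = (a0 + b2)^+2 + (- a2 + b0)^+2 + (a1 + b3)^+2 + (- a3 + b1)^+2 + (a2 - b0)^+2 + (a0 + b2)^+2 + (a3 - b1)^+2 + (a1 + b3)^+2 by rewrite /=; ring.
  have P1 : 0 <= (a0 - b2)^+2 + (a2 + b0)^+2 + (a1 - b3)^+2 + (a3 + b1)^+2 + (a2 + b0)^+2 + (- a0 + b2)^+2 + (a3 + b1)^+2 + (- a1 + b3)^+2 by rewrite !addr_ge0 ?sqr_ge0.
  have P2 : 0 <= (a0 + b2)^+2 + (- a2 + b0)^+2 + (a1 + b3)^+2 + (- a3 + b1)^+2 + (a2 - b0)^+2 + (a0 + b2)^+2 + (a3 - b1)^+2 + (a1 + b3)^+2 by rewrite !addr_ge0 ?sqr_ge0.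
  move: E1 E2 P1 P2; rewrite /= => E1 E2 P1 P2; apply/andP; split; lra.
case: k hk => [_|k hk].
  have E1 : 2 * (bc (St a0 a1 a2 a3 b0 b1 b2 b3) 1 - bc (St a0 a1 a2 a3 b0 b1 b2 b3) 4) = (2*a2)^+2 + (2*b2)^+2 + (2*a3)^+2 + (2*b3)^+2 by rewrite /=; ring.
  have E2 : 2 * (bc (St a0 a1 a2 a3 b0 b1 b2 b3) 1 + bc (St a0 a1 a2 a3 b0 b1 b2 b3) 4) = (2*a0)^+2 + (2*b0)^+2 + (2*a1)^+2 + (2*b1)^+2 by rewrite /=; ring.
  have P1 : 0 <= (2*a2)^+2 + (2*b2)^+2 + (2*a3)^+2 + (2*b3)^+2 by rewrite !addr_ge0 ?sqr_ge0.
  have P2 : 0 <= (2*a0)^+2 + (2*b0)^+2 + (2*a1)^+2 + (2*b1)^+2 by rewrite !addr_ge0 ?sqr_ge0.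
  move: E1 E2 P1 P2; rewrite /= => E1 E2 P1 P2; apply/andP; split; lra.
case: k hk => [_|k hk].
  have E1 : 2 * (bc (St a0 a1 a2 a3 b0 b1 b2 b3) 1 - bc (St a0 a1 a2 a3 b0 b1 b2 b3) 5) = (a0 - a1)^+2 + (b0 - b1)^+2 + (- a0 + a1)^+2 + (- b0 + b1)^+2 + (a2 - a3)^+2 + (b2 - b3)^+2 + (- a2 + a3)^+2 + (- b2 + b3)^+2 by rewrite /=; ring.
  have E2 : 2 * (bc (St a0 a1 a2 a3 b0 b1 b2 b3) 1 + bc (St a0 a1 a2 a3 b0 b1 b2 b3) 5) = (a0 + a1)^+2 + (b0 + b1)^+2 + (a0 + a1)^+2 + (b0 + b1)^+2 + (a2 + a3)^+2 + (b2 + b3)^+2 + (a2 + a3)^+2 + (b2 + b3)^+2 by rewrite /=; ring.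
  have P1 : 0 <= (a0 - a1)^+2 + (b0 - b1)^+2 + (- a0 + a1)^+2 + (- b0 + b1)^+2 + (a2 - a3)^+2 + (b2 - b3)^+2 + (- a2 + a3)^+2 + (- b2 + b3)^+2 by rewrite !addr_ge0 ?sqr_ge0.
  have P2 : 0 <= (a0 + a1)^+2 + (b0 + b1)^+2 + (a0 + a1)^+2 + (b0 + b1)^+2 + (a2 + a3)^+2 + (b2 + b3)^+2 + (a2 + a3)^+2 + (b2 + b3)^+2 by rewrite !addr_ge0 ?sqr_ge0.
  move: E1 E2 P1 P2; rewrite /= => E1 E2 P1 P2; apply/andP; split; lra.
case: k hk => [_|k hk].
  have E1 : 2 * (bc (St a0 a1 a2 a3 b0 b1 b2 b3) 1 - bc (St a0 a1 a2 a3 b0 b1 b2 b3) 6) = (a0 - b1)^+2 + (a1 + b0)^+2 + (a1 + b0)^+2 + (- a0 + b1)^+2 + (a2 - b3)^+2 + (a3 + b2)^+2 + (a3 + b2)^+2 + (- a2 + b3)^+2 by rewrite /=; ring.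
  have E2 : 2 * (bc (St a0 a1 a2 a3 b0 b1 b2 b3) 1 + bc (St a0 a1 a2 a3 b0 b1 b2 b3) 6) = (a0 + b1)^+2 + (- a1 + b0)^+2 + (a1 - b0)^+2 + (a0 + b1)^+2 + (a2 + b3)^+2 + (- a3 + b2)^+2 + (a3 - b2)^+2 + (a2 + b3)^+2 by rewrite /=; ring.
  have P1 : 0 <= (a0 - b1)^+2 + (a1 + b0)^+2 + (a1 + b0)^+2 + (- a0 + b1)^+2 + (a2 - b3)^+2 + (a3 + b2)^+2 + (a3 + b2)^+2 + (- a2 + b3)^+2 by rewrite !addr_ge0 ?sqr_ge0.
  have P2 : 0 <= (a0 + b1)^+2 + (- a1 + b0)^+2 + (a1 - b0)^+2 + (a0 + b1)^+2 + (a2 + b3)^+2 + (- a3 + b2)^+2 + (a3 - b2)^+2 + (a2 + b3)^+2 by rewrite !addr_ge0 ?sqr_ge0.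
  move: E1 E2 P1 P2; rewrite /= => E1 E2 P1 P2; apply/andP; split; lra.
case: k hk => [_|k hk].
  have E1 : 2 * (bc (St a0 a1 a2 a3 b0 b1 b2 b3) 1 - bc (St a0 a1 a2 a3 b0 b1 b2 b3) 7) = (2*a1)^+2 + (2*b1)^+2 + (2*a3)^+2 + (2*b3)^+2 by rewrite /=; ring.
  have E2 : 2 * (bc (St a0 a1 a2 a3 b0 b1 b2 b3) 1 + bc (St a0 a1 a2 a3 b0 b1 b2 b3) 7) = (2*a0)^+2 + (2*b0)^+2 + (2*a2)^+2 + (2*b2)^+2 by rewrite /=; ring.
  have P1 : 0 <= (2*a1)^+2 + (2*b1)^+2 + (2*a3)^+2 + (2*b3)^+2 by rewrite !addr_ge0 ?sqr_ge0.
  have P2 : 0 <= (2*a0)^+2 + (2*b0)^+2 + (2*a2)^+2 + (2*b2)^+2 by rewrite !addr_ge0 ?sqr_ge0.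
  move: E1 E2 P1 P2; rewrite /= => E1 E2 P1 P2; apply/andP; split; lra.
case: k hk => [_|k hk].
  have E1 : 2 * (bc (St a0 a1 a2 a3 b0 b1 b2 b3) 1 - bc (St a0 a1 a2 a3 b0 b1 b2 b3) 8) = (a0 - a3)^+2 + (b0 - b3)^+2 + (a1 - a2)^+2 + (b1 - b2)^+2 + (- a1 + a2)^+2 + (- b1 + b2)^+2 + (- a0 + a3)^+2 + (- b0 + b3)^+2 by rewrite /=; ring.
  have E2 : 2 * (bc (St a0 a1 a2 a3 b0 b1 b2 b3) 1 + bc (St a0 a1 a2 a3 b0 b1 b2 b3) 8) = (a0 + a3)^+2 + (b0 + b3)^+2 + (a1 + a2)^+2 + (b1 + b2)^+2 + (a1 + a2)^+2 + (b1 + b2)^+2 + (a0 + a3)^+2 + (b0 + b3)^+2 by rewrite /=; ring.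
  have P1 : 0 <= (a0 - a3)^+2 + (b0 - b3)^+2 + (a1 - a2)^+2 + (b1 - b2)^+2 + (- a1 + a2)^+2 + (- b1 + b2)^+2 + (- a0 + a3)^+2 + (- b0 + b3)^+2 by rewrite !addr_ge0 ?sqr_ge0.
  have P2 : 0 <= (a0 + a3)^+2 + (b0 + b3)^+2 + (a1 + a2)^+2 + (b1 + b2)^+2 + (a1 + a2)^+2 + (b1 + b2)^+2 + (a0 + a3)^+2 + (b0 + b3)^+2 by rewrite !addr_ge0 ?sqr_ge0.
  move: E1 E2 P1 P2; rewrite /= => E1 E2 P1 P2; apply/andP; split; lra.
case: k hk => [_|k hk].
  have E1 : 2 * (bc (St a0 a1 a2 a3 b0 b1 b2 b3) 1 - bc (St a0 a1 a2 a3 b0 b1 b2 b3) 9) = (a0 - b3)^+2 + (a3 + b0)^+2 + (a1 + b2)^+2 + (- a2 + b1)^+2 + (a2 - b1)^+2 + (a1 + b2)^+2 + (a3 + b0)^+2 + (- a0 + b3)^+2 by rewrite /=; ring.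
  have E2 : 2 * (bc (St a0 a1 a2 a3 b0 b1 b2 b3) 1 + bc (St a0 a1 a2 a3 b0 b1 b2 b3) 9) = (a0 + b3)^+2 + (- a3 + b0)^+2 + (a1 - b2)^+2 + (a2 + b1)^+2 + (a2 + b1)^+2 + (- a1 + b2)^+2 + (a3 - b0)^+2 + (a0 + b3)^+2 by rewrite /=; ring.
  have P1 : 0 <= (a0 - b3)^+2 + (a3 + b0)^+2 + (a1 + b2)^+2 + (- a2 + b1)^+2 + (a2 - b1)^+2 + (a1 + b2)^+2 + (a3 + b0)^+2 + (- a0 + b3)^+2 by rewrite !addr_ge0 ?sqr_ge0.
  have P2 : 0 <= (a0 + b3)^+2 + (- a3 + b0)^+2 + (a1 - b2)^+2 + (a2 + b1)^+2 + (a2 + b1)^+2 + (- a1 + b2)^+2 + (a3 - b0)^+2 + (a0 + b3)^+2 by rewrite !addr_ge0 ?sqr_ge0.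
  move: E1 E2 P1 P2; rewrite /= => E1 E2 P1 P2; apply/andP; split; lra.
case: k hk => [_|k hk].
  have E1 : 2 * (bc (St a0 a1 a2 a3 b0 b1 b2 b3) 1 - bc (St a0 a1 a2 a3 b0 b1 b2 b3) 10) = (a0 - a2)^+2 + (b0 - b2)^+2 + (a1 + a3)^+2 + (b1 + b3)^+2 + (- a0 + a2)^+2 + (- b0 + b2)^+2 + (a1 + a3)^+2 + (b1 + b3)^+2 by rewrite /=; ring.
  have E2 : 2 * (bc (St a0 a1 a2 a3 b0 b1 b2 b3) 1 + bc (St a0 a1 a2 a3 b0 b1 b2 b3) 10) = (a0 + a2)^+2 + (b0 + b2)^+2 + (a1 - a3)^+2 + (b1 - b3)^+2 + (a0 + a2)^+2 + (b0 + b2)^+2 + (- a1 + a3)^+2 + (- b1 + b3)^+2 by rewrite /=; ring.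
  have P1 : 0 <= (a0 - a2)^+2 + (b0 - b2)^+2 + (a1 + a3)^+2 + (b1 + b3)^+2 + (- a0 + a2)^+2 + (- b0 + b2)^+2 + (a1 + a3)^+2 + (b1 + b3)^+2 by rewrite !addr_ge0 ?sqr_ge0.
  have P2 : 0 <= (a0 + a2)^+2 + (b0 + b2)^+2 + (a1 - a3)^+2 + (b1 - b3)^+2 + (a0 + a2)^+2 + (b0 + b2)^+2 + (- a1 + a3)^+2 + (- b1 + b3)^+2 by rewrite !addr_ge0 ?sqr_ge0.
  move: E1 E2 P1 P2; rewrite /= => E1 E2 P1 P2; apply/andP; split; lra.
case: k hk => [_|k hk].
  have E1 : 2 * (bc (St a0 a1 a2 a3 b0 b1 b2 b3) 1 - bc (St a0 a1 a2 a3 b0 b1 b2 b3) 11) = (a0 - b3)^+2 + (a3 + b0)^+2 + (a1 - b2)^+2 + (a2 + b1)^+2 + (a2 + b1)^+2 + (- a1 + b2)^+2 + (a3 + b0)^+2 + (- a0 + b3)^+2 by rewrite /=; ring.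
  have E2 : 2 * (bc (St a0 a1 a2 a3 b0 b1 b2 b3) 1 + bc (St a0 a1 a2 a3 b0 b1 b2 b3) 11) = (a0 + b3)^+2 + (- a3 + b0)^+2 + (a1 + b2)^+2 + (- a2 + b1)^+2 + (a2 - b1)^+2 + (a1 + b2)^+2 + (a3 - b0)^+2 + (a0 + b3)^+2 by rewrite /=; ring.
  have P1 : 0 <= (a0 - b3)^+2 + (a3 + b0)^+2 + (a1 - b2)^+2 + (a2 + b1)^+2 + (a2 + b1)^+2 + (- a1 + b2)^+2 + (a3 + b0)^+2 + (- a0 + b3)^+2 by rewrite !addr_ge0 ?sqr_ge0.
  have P2 : 0 <= (a0 + b3)^+2 + (- a3 + b0)^+2 + (a1 + b2)^+2 + (- a2 + b1)^+2 + (a2 - b1)^+2 + (a1 + b2)^+2 + (a3 - b0)^+2 + (a0 + b3)^+2 by rewrite !addr_ge0 ?sqr_ge0.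
  move: E1 E2 P1 P2; rewrite /= => E1 E2 P1 P2; apply/andP; split; lra.
case: k hk => [_|k hk].
  have E1 : 2 * (bc (St a0 a1 a2 a3 b0 b1 b2 b3) 1 - bc (St a0 a1 a2 a3 b0 b1 b2 b3) 12) = (a0 + a3)^+2 + (b0 + b3)^+2 + (a1 - a2)^+2 + (b1 - b2)^+2 + (- a1 + a2)^+2 + (- b1 + b2)^+2 + (a0 + a3)^+2 + (b0 + b3)^+2 by rewrite /=; ring.
  have E2 : 2 * (bc (St a0 a1 a2 a3 b0 b1 b2 b3) 1 + bc (St a0 a1 a2 a3 b0 b1 b2 b3) 12) = (a0 - a3)^+2 + (b0 - b3)^+2 + (a1 + a2)^+2 + (b1 + b2)^+2 + (a1 + a2)^+2 + (b1 + b2)^+2 + (- a0 + a3)^+2 + (- b0 + b3)^+2 by rewrite /=; ring.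
  have P1 : 0 <= (a0 + a3)^+2 + (b0 + b3)^+2 + (a1 - a2)^+2 + (b1 - b2)^+2 + (- a1 + a2)^+2 + (- b1 + b2)^+2 + (a0 + a3)^+2 + (b0 + b3)^+2 by rewrite !addr_ge0 ?sqr_ge0.
  have P2 : 0 <= (a0 - a3)^+2 + (b0 - b3)^+2 + (a1 + a2)^+2 + (b1 + b2)^+2 + (a1 + a2)^+2 + (b1 + b2)^+2 + (- a0 + a3)^+2 + (- b0 + b3)^+2 by rewrite !addr_ge0 ?sqr_ge0.
  move: E1 E2 P1 P2; rewrite /= => E1 E2 P1 P2; apply/andP; split; lra.
case: k hk => [_|k hk].
  have E1 : 2 * (bc (St a0 a1 a2 a3 b0 b1 b2 b3) 1 - bc (St a0 a1 a2 a3 b0 b1 b2 b3) 13) = (a0 - b2)^+2 + (a2 + b0)^+2 + (a1 + b3)^+2 + (- a3 + b1)^+2 + (a2 + b0)^+2 + (- a0 + b2)^+2 + (a3 - b1)^+2 + (a1 + b3)^+2 by rewrite /=; ring.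
  have E2 : 2 * (bc (St a0 a1 a2 a3 b0 b1 b2 b3) 1 + bc (St a0 a1 a2 a3 b0 b1 b2 b3) 13) = (a0 + b2)^+2 + (- a2 + b0)^+2 + (a1 - b3)^+2 + (a3 + b1)^+2 + (a2 - b0)^+2 + (a0 + b2)^+2 + (a3 + b1)^+2 + (- a1 + b3)^+2 by rewrite /=; ring.
  have P1 : 0 <= (a0 - b2)^+2 + (a2 + b0)^+2 + (a1 + b3)^+2 + (- a3 + b1)^+2 + (a2 + b0)^+2 + (- a0 + b2)^+2 + (a3 - b1)^+2 + (a1 + b3)^+2 by rewrite !addr_ge0 ?sqr_ge0.
  have P2 : 0 <= (a0 + b2)^+2 + (- a2 + b0)^+2 + (a1 - b3)^+2 + (a3 + b1)^+2 + (a2 - b0)^+2 + (a0 + b2)^+2 + (a3 + b1)^+2 + (- a1 + b3)^+2 by rewrite !addr_ge0 ?sqr_ge0.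
  move: E1 E2 P1 P2; rewrite /= => E1 E2 P1 P2; apply/andP; split; lra.
case: k hk => [_|k hk].
  have E1 : 2 * (bc (St a0 a1 a2 a3 b0 b1 b2 b3) 1 - bc (St a0 a1 a2 a3 b0 b1 b2 b3) 14) = (a0 - a1)^+2 + (b0 - b1)^+2 + (- a0 + a1)^+2 + (- b0 + b1)^+2 + (a2 + a3)^+2 + (b2 + b3)^+2 + (a2 + a3)^+2 + (b2 + b3)^+2 by rewrite /=; ring.
  have E2 : 2 * (bc (St a0 a1 a2 a3 b0 b1 b2 b3) 1 + bc (St a0 a1 a2 a3 b0 b1 b2 b3) 14) = (a0 + a1)^+2 + (b0 + b1)^+2 + (a0 + a1)^+2 + (b0 + b1)^+2 + (a2 - a3)^+2 + (b2 - b3)^+2 + (- a2 + a3)^+2 + (- b2 + b3)^+2 by rewrite /=; ring.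
  have P1 : 0 <= (a0 - a1)^+2 + (b0 - b1)^+2 + (- a0 + a1)^+2 + (- b0 + b1)^+2 + (a2 + a3)^+2 + (b2 + b3)^+2 + (a2 + a3)^+2 + (b2 + b3)^+2 by rewrite !addr_ge0 ?sqr_ge0.
  have P2 : 0 <= (a0 + a1)^+2 + (b0 + b1)^+2 + (a0 + a1)^+2 + (b0 + b1)^+2 + (a2 - a3)^+2 + (b2 - b3)^+2 + (- a2 + a3)^+2 + (- b2 + b3)^+2 by rewrite !addr_ge0 ?sqr_ge0.
  move: E1 E2 P1 P2; rewrite /= => E1 E2 P1 P2; apply/andP; split; lra.
case: k hk => [_|k hk].
  have E1 : 2 * (bc (St a0 a1 a2 a3 b0 b1 b2 b3) 1 - bc (St a0 a1 a2 a3 b0 b1 b2 b3) 15) = (a0 - b1)^+2 + (a1 + b0)^+2 + (a1 + b0)^+2 + (- a0 + b1)^+2 + (a2 + b3)^+2 + (- a3 + b2)^+2 + (a3 - b2)^+2 + (a2 + b3)^+2 by rewrite /=; ring.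
  have E2 : 2 * (bc (St a0 a1 a2 a3 b0 b1 b2 b3) 1 + bc (St a0 a1 a2 a3 b0 b1 b2 b3) 15) = (a0 + b1)^+2 + (- a1 + b0)^+2 + (a1 - b0)^+2 + (a0 + b1)^+2 + (a2 - b3)^+2 + (a3 + b2)^+2 + (a3 + b2)^+2 + (- a2 + b3)^+2 by rewrite /=; ring.
  have P1 : 0 <= (a0 - b1)^+2 + (a1 + b0)^+2 + (a1 + b0)^+2 + (- a0 + b1)^+2 + (a2 + b3)^+2 + (- a3 + b2)^+2 + (a3 - b2)^+2 + (a2 + b3)^+2 by rewrite !addr_ge0 ?sqr_ge0.
  have P2 : 0 <= (a0 + b1)^+2 + (- a1 + b0)^+2 + (a1 - b0)^+2 + (a0 + b1)^+2 + (a2 - b3)^+2 + (a3 + b2)^+2 + (a3 + b2)^+2 + (- a2 + b3)^+2 by rewrite !addr_ge0 ?sqr_ge0.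
  move: E1 E2 P1 P2; rewrite /= => E1 E2 P1 P2; apply/andP; split; lra.
case: k hk => [_|k hk].
  have E1 : 2 * (bc (St a0 a1 a2 a3 b0 b1 b2 b3) 1 - bc (St a0 a1 a2 a3 b0 b1 b2 b3) 16) = (2*a1)^+2 + (2*b1)^+2 + (2*a2)^+2 + (2*b2)^+2 by rewrite /=; ring.
  have E2 : 2 * (bc (St a0 a1 a2 a3 b0 b1 b2 b3) 1 + bc (St a0 a1 a2 a3 b0 b1 b2 b3) 16) = (2*a0)^+2 + (2*b0)^+2 + (2*a3)^+2 + (2*b3)^+2 by rewrite /=; ring.
  have P1 : 0 <= (2*a1)^+2 + (2*b1)^+2 + (2*a2)^+2 + (2*b2)^+2 by rewrite !addr_ge0 ?sqr_ge0.
  have P2 : 0 <= (2*a0)^+2 + (2*b0)^+2 + (2*a3)^+2 + (2*b3)^+2 by rewrite !addr_ge0 ?sqr_ge0.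
  move: E1 E2 P1 P2; rewrite /= => E1 E2 P1 P2; apply/andP; split; lra.
by [].
Qed.

Definition al (v : st) (j : nat) := bc v (j + 2)%N.
Definition be (v : st) (j : nat) := bc v (j + 5)%N.
Definition cc (v : st) (j k : nat) := bc v (8 + 3 * j + k)%N.
Definition Cm (v : st) : 'M[R]_3 := \matrix_(j < 3, k < 3) cc v j k.
Definition alc (v : st) : 'cV[R]_3 := \col_(j < 3) al v j.
Definition bec (v : st) : 'cV[R]_3 := \col_(j < 3) be v j.
Definition asq (v : st) := al v 0 ^+ 2 + al v 1 ^+ 2 + al v 2 ^+ 2.

Lemma id_Cbe (v : st) : Cm v *m bec v = bc v 1 *: alc v.
Proof.
apply/matrixP => i j; rewrite !mxE !big_ord_recl big_ord0 !mxE.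
case: i => [[|[|[|//]]] hi] /=; rewrite /cc /be /al; case: v => * /=; ring.
Qed.

Lemma id_CTal (v : st) : (Cm v)^T *m alc v = bc v 1 *: bec v.
Proof.
apply/matrixP => i j; rewrite !mxE !big_ord_recl big_ord0 !mxE.
case: i => [[|[|[|//]]] hi] /=; rewrite /cc /be /al; case: v => * /=; ring.
Qed.

Lemma id_CCT (v : st) : Cm v *m (Cm v)^T = (bc v 1 ^+ 2 - asq v)%:M + alc v *m (alc v)^T.
Proof.
apply/matrixP => i j; rewrite !mxE !big_ord_recl !big_ord0 !mxE.
case: i => [[|[|[|//]]] hi]; case: j => [[|[|[|//]]] hj] /=;
  rewrite /asq /cc /be /al; case: v => * /=; ring.
Qed.

Lemma id_det (v : st) : \det (Cm v) = - (bc v 1 ^+ 2 - asq v) * bc v 1.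
Proof.
rewrite det33 !mxE /= /asq /cc /al; case: v => * /=; ring.
Qed.

Lemma id_norm (v : st) : be v 0 ^+ 2 + be v 1 ^+ 2 + be v 2 ^+ 2 = asq v.
Proof. rewrite /asq /be /al; case: v => * /=; ring. Qed.

End B.

Section C.
Variable R : realType.
Local Open Scope classical_set_scope.
Local Notation st := (st R).

Definition flA (v : st) := St (a0 v) (a1 v) (- a2 v) (- a3 v) (b0 v) (b1 v) (- b2 v) (- b3 v).
Definition swA (v : st) := St (a2 v) (a3 v) (a0 v) (a1 v) (b2 v) (b3 v) (b0 v) (b1 v).
Definition cjA (v : st) := St (a2 v) (a3 v) (a0 v) (a1 v) (- b2 v) (- b3 v) (- b0 v) (- b1 v).
Definition flB (v : st) := St (a0 v) (- a1 v) (a2 v) (- a3 v) (b0 v) (- b1 v) (b2 v) (- b3 v).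
Definition swB (v : st) := St (a1 v) (a0 v) (a3 v) (a2 v) (b1 v) (b0 v) (b3 v) (b2 v).

Definition sym_at (f : st -> st) (i : nat) :=
  forall v, (forall k, (1 <= k < i)%N -> bc (f v) k = bc v k) /\ bc (f v) i = - bc v i.

Lemma flA_sym : sym_at flA 2. Proof.
move=> [p0 p1 p2 p3 q0 q1 q2 q3]; split;
  [ case=> [//|]; do 6 (case=> [h|]; [first [ exfalso; move: h; lia | rewrite /=; ring ] |]); move=> n /andP[_ h]; exfalso; lia
  | rewrite /=; ring ].
Qed.
Lemma swA_sym : sym_at swA 3. Proof.
move=> [p0 p1 p2 p3 q0 q1 q2 q3]; split;
  [ case=> [//|]; do 6 (case=> [h|]; [first [ exfalso; move: h; lia | rewrite /=; ring ] |]); move=> n /andP[_ h]; exfalso; lia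
  | rewrite /=; ring ].
Qed.
Lemma cjA_sym : sym_at cjA 4. Proof.
move=> [p0 p1 p2 p3 q0 q1 q2 q3]; split;
  [ case=> [//|]; do 6 (case=> [h|]; [first [ exfalso; move: h; lia | rewrite /=; ring ] |]); move=> n /andP[_ h]; exfalso; lia
  | rewrite /=; ring ].
Qed.
Lemma flB_sym : sym_at flB 5. Proof.
move=> [p0 p1 p2 p3 q0 q1 q2 q3]; split;
  [ case=> [//|]; do 6 (case=> [h|]; [first [ exfalso; move: h; lia | rewrite /=; ring ] |]); move=> n /andP[_ h]; exfalso; lia
  | rewrite /=; ring ].
Qed.
Lemma swB_sym : sym_at swB 6. Proof.
move=> [p0 p1 p2 p3 q0 q1 q2 q3]; split;
  [ case=> [//|]; do 6 (case=> [h|]; [first [ exfalso; move: h; lia | rewrite /=; ring ] |]); move=> n /andP[_ h]; exfalso; lia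
  | rewrite /=; ring ].
Qed.

Definition rotn (n : nat -> R) (v : st) :=
  let n1 := n 0%N in let n2 := n 1%N in let n3 := n 2%N in
  St (n3 * a0 v + n1 * a2 v + n2 * b2 v) (n3 * a1 v + n1 * a3 v + n2 * b3 v)
     (n1 * a0 v - n2 * b0 v - n3 * a2 v) (n1 * a1 v - n2 * b1 v - n3 * a3 v)
     (n3 * b0 v + n1 * b2 v - n2 * a2 v) (n3 * b1 v + n1 * b3 v - n2 * a3 v)
     (n1 * b0 v + n2 * a0 v - n3 * b2 v) (n1 * b1 v + n2 * a1 v - n3 * b3 v).

Lemma rotn_effN (n : nat -> R) (v : st) (N := n 0%N ^+ 2 + n 1%N ^+ 2 + n 2%N ^+ 2) :
  [/\ bc (rotn n v) 1 = N * bc v 1,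
      forall j, (j < 3)%N -> al (rotn n v) j =
         2 * n j * (n 0%N * al v 0 + n 1%N * al v 1 + n 2%N * al v 2) - N * al v j,
      forall k, (k < 3)%N -> be (rotn n v) k = N * be v k &
      forall j k, (j < 3)%N -> (k < 3)%N -> cc (rotn n v) j k =
         2 * n j * (n 0%N * cc v 0 k + n 1%N * cc v 1 k + n 2%N * cc v 2 k) - N * cc v j k].
Proof.
rewrite /N; case: v => p0 p1 p2 p3 q0 q1 q2 q3; split.
- rewrite /=; ring.
- case=> [|[|[|//]]] _; rewrite /al /=; ring.
- case=> [|[|[|//]]] _; rewrite /be /=; ring.
- move=> j k hj hk; case: j hj => [|[|[|//]]] _; case: k hk => [|[|[|//]]] _; rewrite /cc /=; ring.
Qed.

Lemma rotn_eff (n : nat -> R) (v : st) : n 0%N ^+ 2 + n 1%N ^+ 2 + n 2%N ^+ 2 = 1 ->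
  [/\ bc (rotn n v) 1 = bc v 1,
      forall j, (j < 3)%N -> al (rotn n v) j =
         2 * n j * (n 0%N * al v 0 + n 1%N * al v 1 + n 2%N * al v 2) - al v j,
      forall k, (k < 3)%N -> be (rotn n v) k = be v k &
      forall j k, (j < 3)%N -> (k < 3)%N -> cc (rotn n v) j k =
         2 * n j * (n 0%N * cc v 0 k + n 1%N * cc v 1 k + n 2%N * cc v 2 k) - cc v j k].
Proof.
move=> hn; case: (rotn_effN n v); rewrite hn => h1 h2 h3 h4; split.
- by rewrite h1 mul1r.
- by move=> j hj; rewrite h2 // mul1r.
- by move=> k hk; rewrite h3 // mul1r.
- by move=> j k hj hk; rewrite h4 // mul1r.
Qed.

End C.

Section D.
Variable R : realType.
Local Open Scope classical_set_scope.
Local Notation st := (st R).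

Lemma condE (b : nat -> R) (i : nat) (x : R) : (2 <= i <= 16)%N ->
  cond_values b i x <->
  exists v : st, bc v 1 = 1 /\ (forall k, (1 <= k < i)%N -> bc v k = b k) /\ x = bc v i.
Proof.
case/andP=> hi1 hi2; split.
- case=> rho [[psi [hn ->]] hk] <-; exists (st_of psi); split; first exact: norm_st.
  split; last by rewrite bloch_st //; apply/andP; split => //; lia.
  move=> k /andP[k1 k2]; rewrite -hk ?k1 ?k2 // bloch_st //; apply/andP; split => //; lia.
- case=> v [hn [hk ->]]; exists (psi_of v *m adj (psi_of v)).
    split; first by exists (psi_of v); split => //; exact: psi_of_norm.
    move=> k /andP[k1 k2]; rewrite bloch_st ?st_ofK ?hk ?k1 ?k2 //; apply/andP; split => //; lia.
  by rewrite bloch_st ?st_ofK //; apply/andP; split => //; lia.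
Qed.

Lemma cond_bounded (b : nat -> R) (i : nat) x : (2 <= i <= 16)%N ->
  cond_values b i x -> -1 <= x <= 1.
Proof.
move=> hi /(condE _ _ hi) [v [hn [_ ->]]].
by have := bc_bound v hi; rewrite hn.
Qed.

Lemma sym_mid (S : set R) (a : R) : (exists x, S x) -> (forall x, S x -> -1 <= x <= 1) ->
  (forall x, S x -> S (2 * a - x)) -> (sup S + inf S) / 2 = a.
Proof.
move=> ne bd sy.
have hub : has_ubound S by exists 1 => x /bd /andP[].
have hlb : has_lbound S by exists (-1) => x /bd /andP[].
have h1 : sup S <= 2 * a - inf S.
  apply: ge_sup => // x Sx.
  have := ge_inf hlb (sy _ Sx); lra.
have h2 : 2 * a - sup S <= inf S.
  apply: lb_le_inf => // x Sx.
  have := ub_le_sup hub (sy _ Sx); lra.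
lra.
Qed.

Lemma Dchi2_le (x h B : R) : 0 <= B -> (-1 < h < 1 -> (x - h) ^+ 2 / (1 - h ^+ 2) <= B) ->
  Dchi2 x h <= B.
Proof.
move=> B0 hB; rewrite /Dchi2; case: ifP => // /andP[h1 h2].
suff -> : ((x + 1) / 2) ^+ 2 / ((h + 1) / 2) + ((1 - x) / 2) ^+ 2 / ((1 - h) / 2) - 1
   = (x - h) ^+ 2 / (1 - h ^+ 2) by apply: hB; rewrite h1 h2.
have e1 : h + 1 != 0 by apply/eqP; lra.
have e2 : 1 - h != 0 by apply/eqP; lra.
have e3 : 1 - h ^+ 2 != 0 by rewrite (_ : 1 - h ^+ 2 = (1 - h) * (h + 1)); [rewrite mulf_neq0 | ring].
field; rewrite e1 e2 /=.
rewrite (_ : 1 - h ^+ 2 = (1 - h) * (h + 1)) ?mulf_neq0 //; ring.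
Qed.

Lemma term_bound (b : nat -> R) (i : nat) (a B : R) : (2 <= i <= 16)%N ->
  cond_values b i (b i) ->
  (forall x, cond_values b i x -> cond_values b i (2 * a - x)) ->
  0 <= B -> (-1 < a < 1 -> (b i - a) ^+ 2 / (1 - a ^+ 2) <= B) ->
  Dchi2 (b i) (hmid b i) <= B.
Proof.
move=> hi hbi hsy B0 hB.
have -> : hmid b i = a.
  rewrite /hmid /bmax /bmin (sym_mid (a := a)) //; last first.
    by move=> x; apply: cond_bounded.
  by exists (b i).
exact: Dchi2_le.
Qed.

End D.

Section E.
Variable R : realType.
Local Open Scope classical_set_scope.

Lemma term_one (b : nat -> R) (i : nat) (B : R) : (2 <= i <= 16)%N ->
  cond_values b i (b i) -> (forall x, cond_values b i x -> x = b i) -> 0 <= B ->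
  Dchi2 (b i) (hmid b i) <= B.
Proof.
move=> hi hbi h1 B0; apply: (term_bound (a := b i)) => //.
  by move=> x /h1 ->; rewrite (_ : 2 * b i - b i = b i) //; ring.
by move=> _; rewrite subrr expr0n /= mul0r.
Qed.

Lemma term_two (b : nat -> R) (i : nat) (c B : R) : (2 <= i <= 16)%N ->
  cond_values b i (b i) ->
  (forall x, cond_values b i x -> x = b i \/ x = c) -> 0 <= B ->
  (cond_values b i c -> -1 < (b i + c) / 2 < 1 ->
     (b i - (b i + c) / 2) ^+ 2 / (1 - ((b i + c) / 2) ^+ 2) <= B) ->
  Dchi2 (b i) (hmid b i) <= B.
Proof.
move=> hi hbi h2 B0 hB.
case: (pselect (cond_values b i c)) => hc.
- apply: (term_bound (a := (b i + c) / 2)) => //; last exact: hB.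
  move=> x /h2 [->|->].
    by rewrite (_ : 2 * ((b i + c) / 2) - b i = c) //; lra.
  by rewrite (_ : 2 * ((b i + c) / 2) - c = b i) //; lra.
- apply: term_one => // x hx; case: (h2 x hx) => // e.
  by exfalso; apply: hc; rewrite -e.
Qed.

Lemma sum_if (m0 : nat) (X : R) : (m0 < 9)%N ->
  \sum_(m < 9) (if (m : nat) == m0 then X else 0) = X.
Proof.
move=> h; rewrite (bigD1 (Ordinal h)) //= eqxx big1 ?addr0 // => i hi.
case: eqP => // e; exfalso; move/negP: hi; apply; apply/eqP/val_inj => /=.
exact: e.
Qed.

Lemma circle_line (s P Q e f : R) : P ^+ 2 + Q ^+ 2 != 0 -> e ^+ 2 + f ^+ 2 = s ^+ 2 ->
  P * e + Q * f = P * s ->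
  (e = s /\ f = 0) \/
  (e = s - 2 * s * Q ^+ 2 / (P ^+ 2 + Q ^+ 2) /\ f = 2 * s * P * Q / (P ^+ 2 + Q ^+ 2)).
Proof.
move=> hR hc hl.
set R2 := P ^+ 2 + Q ^+ 2 in hR *.
set t := (Q * (e - s) - P * f) / R2.
have h0 : P * e + Q * f - P * s = 0 by rewrite hl subrr.
have E1 : (e - s) * R2 = (Q * (e - s) - P * f) * Q.
  transitivity ((Q * (e - s) - P * f) * Q + P * (P * e + Q * f - P * s)).
    rewrite /R2; ring.
  by rewrite h0 mulr0 addr0.
have E2 : f * R2 = - (Q * (e - s) - P * f) * P.
  transitivity (- (Q * (e - s) - P * f) * P + Q * (P * e + Q * f - P * s)).
    rewrite /R2; ring.
  by rewrite h0 mulr0 addr0.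
have he : e = s + t * Q.
  have h' : e - s = t * Q by rewrite /t mulrAC -E1 mulfK.
  by rewrite -h'; ring.
have hf : f = - (t * P).
  apply: (mulIf hR); rewrite E2 /t; field; exact: hR.
have : t * (2 * s * Q + t * R2) = 0.
  transitivity ((s + t * Q) ^+ 2 + (- (t * P)) ^+ 2 - s ^+ 2).
    rewrite /R2; ring.
  by rewrite -he -hf hc subrr.
move/eqP; rewrite mulf_eq0 => /orP [/eqP t0|/eqP h2].
  by left; rewrite he hf t0 !mul0r addr0 oppr0.
right.
have ht : t = - (2 * s * Q) / R2.
  have : t * R2 = - (2 * s * Q) by lra.
  by move=> <-; rewrite mulfK.
by rewrite he hf ht; split; field.
Qed.


Lemma sqr_abs (x : R) : `|x| ^+ 2 = x ^+ 2.
Proof. by rewrite real_normK // num_real. Qed.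

Lemma Xbound (s P Q A : R) : P ^+ 2 + Q ^+ 2 <= (1 - `|A|) ^+ 2 -> 0 < P ^+ 2 + Q ^+ 2 ->
  -1 < A < 1 ->
  (A + s * P - A) ^+ 2 / (1 - A ^+ 2) <= s ^+ 2 * P ^+ 2 / (P ^+ 2 + Q ^+ 2).
Proof.
move=> hR hpos hA.
have hA1 : `|A| <= 1 by rewrite ler_norml; lra.
have hle : P ^+ 2 + Q ^+ 2 <= 1 - A ^+ 2.
  apply: (le_trans hR); rewrite -(sqr_abs A).
  have := normr_ge0 A; nra.
have h1 : 0 < 1 - A ^+ 2 by lra.
rewrite (_ : A + s * P - A = s * P); last by ring.
rewrite ler_pdivrMr // mulrAC ler_pdivlMr //.
rewrite exprMn; apply: ler_wpM2l; last exact: hle.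
by rewrite mulr_ge0 ?sqr_ge0.
Qed.

Lemma Ybound (s P Q A' P' Q' : R) : 0 <= s <= 1 -> 0 < P ^+ 2 + Q ^+ 2 ->
  `|A'| <= 1 -> P' ^+ 2 + Q' ^+ 2 <= (1 - `|A'|) ^+ 2 ->
  let R2 := P ^+ 2 + Q ^+ 2 in
  let bb := A' + s * P' in
  let c := A' + (s - 2 * s * Q ^+ 2 / R2) * P' + (2 * s * P * Q / R2) * Q' in
  -1 < (bb + c) / 2 < 1 ->
  (bb - (bb + c) / 2) ^+ 2 / (1 - ((bb + c) / 2) ^+ 2) <= s ^+ 2 * Q ^+ 2 / R2.
Proof.
move=> hs hR hA1 hR' R2 bb c hh.
have [s0 s1] : 0 <= s /\ s <= 1 by apply/andP.
have hR2 : R2 != 0 by apply: lt0r_neq0.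
set h := (bb + c) / 2 in hh *.
set g := (P' * P + Q' * Q) / R2.
set k := (P' * Q - Q' * P) / R2.
have e1 : bb - h = s * Q * k by rewrite /h /bb /c /k; field.
have e2 : h = A' + s * (P * g) by rewrite /h /bb /c /g /R2; field.
have e3 : P' ^+ 2 + Q' ^+ 2 = (g ^+ 2 + k ^+ 2) * R2 by rewrite /g /k /R2; field.
have hpos : 0 < 1 - h ^+ 2.
  have : 0 < (1 - h) * (1 + h) by apply: mulr_gt0; lra.
  by rewrite (_ : (1 - h) * (1 + h) = 1 - h ^+ 2) //; ring.
set y := `|P * g|.
have y0 : 0 <= y by exact: normr_ge0.
have y2 : y ^+ 2 <= g ^+ 2 * R2.
  rewrite /y sqr_abs /R2 exprMn; have := sqr_ge0 Q; have := sqr_ge0 g; nra.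
have a0 : 0 <= `|A'| by exact: normr_ge0.
have k2 : 0 <= k ^+ 2 * R2 by rewrite mulr_ge0 ?sqr_ge0 // ltW.
have yle : y <= 1 - `|A'|.
  have : y ^+ 2 <= (1 - `|A'|) ^+ 2.
    apply: le_trans hR'; rewrite e3; nra.
  move=> hy; case: (lerP y (1 - `|A'|)) => // hlt; exfalso.
  have ha : 0 <= 1 - `|A'| by lra.
  nra.
have hh2 : h ^+ 2 <= (`|A'| + y) ^+ 2.
  have hn : `|h| <= `|A'| + y.
    rewrite e2 (le_trans (ler_normD _ _)) // lerD2l normrM (ger0_norm s0) /y.
    have := normr_ge0 (P * g); nra.
  rewrite -(sqr_abs h); have := normr_ge0 h; nra.
have key : k ^+ 2 * R2 <= 1 - h ^+ 2.
  have hk : k ^+ 2 * R2 <= (1 - `|A'|) ^+ 2 - y ^+ 2.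
    have := hR'; rewrite e3; nra.
  have := mulr_ge0 a0 (_ : 0 <= 1 - `|A'| - y); nra.
rewrite e1 ler_pdivrMr //.
have hR2' : 0 <= s ^+ 2 * Q ^+ 2 / R2.
  by apply: divr_ge0; [rewrite mulr_ge0 ?sqr_ge0 | exact: ltW].
apply: le_trans (ler_wpM2l hR2' key).
have -> : s ^+ 2 * Q ^+ 2 / R2 * (k ^+ 2 * R2) = (s * Q * k) ^+ 2.
  by field.
by [].
Qed.

End E.

Section F.
Variable R : realType.
Local Open Scope classical_set_scope.

Lemma Cpart (b A P Q : nat -> R) (s : R) :
  0 <= s <= 1 ->
  (forall m, (m < 9)%N -> `|A m| <= 1 /\ P m ^+ 2 + Q m ^+ 2 <= (1 - `|A m|) ^+ 2) ->
  (forall m, (m < 9)%N -> b (8 + m)%N = A m + s * P m) ->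
  (forall m, (m < 9)%N -> cond_values b (8 + m) (b (8 + m)%N)) ->
  (forall m x, (m < 9)%N -> cond_values b (8 + m) x -> exists e f, e ^+ 2 + f ^+ 2 = s ^+ 2 /\
      (forall m', (m' < m)%N -> A m' + e * P m' + f * Q m' = b (8 + m')%N) /\
      x = A m + e * P m + f * Q m) ->
  (forall m x, (m < 9)%N -> cond_values b (8 + m) x ->
      (forall m', (m' < m)%N -> P m' = 0 /\ Q m' = 0) ->
      cond_values b (8 + m) (2 * A m - x)) ->
  \sum_(m < 9) Dchi2 (b (8 + m)%N) (hmid b (8 + m)%N) <= s ^+ 2.
Proof.
move=> hs hAPQ hb hin hch hsy.
have hi m : (m < 9)%N -> (2 <= 8 + m <= 16)%N by move=> ?; apply/andP; split; lia.
pose nz m := (m < 9)%N && ((P m != 0) || (Q m != 0)).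
have zero_of m : (m < 9)%N -> ~~ nz m -> P m = 0 /\ Q m = 0.
  move=> hm; rewrite /nz hm /= negb_or => /andP[/negPn/eqP -> /negPn/eqP ->]; done.
have trivial m : (m < 9)%N -> (forall m', (m' <= m)%N -> P m' = 0 /\ Q m' = 0) ->
    Dchi2 (b (8 + m)%N) (hmid b (8 + m)%N) <= 0.
  move=> hm hz; apply: term_one; [exact: (hi _ hm)|exact: (hin _ hm)| |by []].
  move=> x /(hch _ _ hm) [e [f [_ [_ ->]]]]; have [-> ->] := hz m (leqnn m).
  by rewrite hb // (proj1 (hz m (leqnn m))); ring.
case: (pselect (exists m, nz m)) => [hex|hnone]; last first.
  apply: le_trans (_ : \sum_(m < 9) (0:R) <= _); last by rewrite big1 // sqr_ge0.
  apply: ler_sum => -[m hm] _ /=; apply: trivial => // m' hm'.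
  apply: zero_of; first lia.
  by apply/negP => hn; apply: hnone; exists m'.
case: (ex_minnP hex) => m1 /andP[hm1 hnz1] hmin.
have zlt m : (m < m1)%N -> P m = 0 /\ Q m = 0.
  move=> hm; apply: zero_of; first lia.
  by apply/negP => /hmin; lia.
set R2 := P m1 ^+ 2 + Q m1 ^+ 2.
have R2pos : 0 < R2.
  case/orP: hnz1 => hn.
    have : 0 < P m1 ^+ 2 by rewrite exprn_even_gt0.
    have := sqr_ge0 (Q m1); rewrite /R2; lra.
  have : 0 < Q m1 ^+ 2 by rewrite exprn_even_gt0.
  have := sqr_ge0 (P m1); rewrite /R2; lra.
have R2n0 : R2 != 0 by apply: lt0r_neq0.
set e1 := s - 2 * s * Q m1 ^+ 2 / R2.
set f1 := 2 * s * P m1 * Q m1 / R2.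
pose v1 m := A m + e1 * P m + f1 * Q m.
have two m x : (m1 < m)%N -> (m < 9)%N -> cond_values b (8 + m) x ->
    exists e f, ((e = s /\ f = 0) \/ (e = e1 /\ f = f1)) /\
      (forall m', (m' < m)%N -> A m' + e * P m' + f * Q m' = b (8 + m')%N) /\
      x = A m + e * P m + f * Q m.
  move=> h1 hm /(hch _ _ hm) [e [f [hc [hpre hx]]]]; exists e, f; split => //.
  apply: circle_line => //.
  have := hpre _ h1; rewrite hb //; lra.
set X := s ^+ 2 * P m1 ^+ 2 / R2.
set Y := s ^+ 2 * Q m1 ^+ 2 / R2.
have X0 : 0 <= X by apply: divr_ge0; [rewrite mulr_ge0 ?sqr_ge0 | exact: ltW].
have Y0 : 0 <= Y by apply: divr_ge0; [rewrite mulr_ge0 ?sqr_ge0 | exact: ltW].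
have XY : X + Y = s ^+ 2 by rewrite /X /Y /R2; field.
have bnd_lt m : (m < m1)%N -> Dchi2 (b (8 + m)%N) (hmid b (8 + m)%N) <= 0.
  move=> hm; apply: trivial; first lia.
  move=> m' hm'; apply: zlt; lia.
have bnd_eq : Dchi2 (b (8 + m1)%N) (hmid b (8 + m1)%N) <= X.
  apply: (term_bound (a := A m1)); [exact: (hi _ hm1)|exact: (hin _ hm1)| |exact: X0|].
    by move=> x hx; apply: hsy.
  move=> hA; rewrite hb //; have [_ h2] := hAPQ _ hm1; exact: Xbound.
case: (pselect (exists m, (m1 < m)%N && (m < 9)%N && (v1 m != b (8 + m)%N))) => [hex2|hno2].
- case: (ex_minnP hex2) => m2 /andP[/andP[h12 hm2] hv2] hmin2.
  have bnd_mid m : (m1 < m)%N -> (m < m2)%N ->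
      Dchi2 (b (8 + m)%N) (hmid b (8 + m)%N) <= 0.
    move=> h1 h2; have hm : (m < 9)%N by lia.
    apply: term_one; [exact: (hi _ hm)|exact: (hin _ hm)| |by []].
    move=> x /(two _ _ h1 hm) [e [f [[[-> ->]|[-> ->]] [_ ->]]]].
      by rewrite hb //; ring.
    case: (eqVneq (v1 m) (b (8 + m)%N)) => [<- //|hne].
    by have := hmin2 m; rewrite h1 hm hne /= => /(_ isT); lia.
  have bnd_2 : Dchi2 (b (8 + m2)%N) (hmid b (8 + m2)%N) <= Y.
    apply: (term_two (c := v1 m2)); [exact: (hi _ hm2)|exact: (hin _ hm2)| |exact: Y0|].
      move=> x /(two _ _ h12 hm2) [e [f [[[-> ->]|[-> ->]] [_ ->]]]].
        by left; rewrite hb //; ring.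
      by right.
    move=> _ hh; rewrite hb //.
    have [hA h2] := hAPQ _ hm2.
    move: hh; rewrite hb // /v1 /e1 /f1 => hh.
    exact: (Ybound (P := P m1) (Q := Q m1) hs R2pos hA h2 hh).
  have bnd_gt m : (m2 < m)%N -> (m < 9)%N -> Dchi2 (b (8 + m)%N) (hmid b (8 + m)%N) <= 0.
    move=> h2 hm; have h1 : (m1 < m)%N by lia.
    apply: term_one; [exact: (hi _ hm)|exact: (hin _ hm)| |by []].
    move=> x /(two _ _ h1 hm) [e [f [[[-> ->]|[-> ->]] [hpre ->]]]].
      by rewrite hb //; ring.
    by exfalso; move/eqP: hv2; apply; rewrite -(hpre _ h2).
  apply: le_trans (_ : \sum_(m < 9) ((if (m : nat) == m1 then X else 0) +
      (if (m : nat) == m2 then Y else 0)) <= _); last first.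
    by rewrite big_split /= !sum_if // XY.
  apply: ler_sum => -[m hm] _ /=.
  have RHS0 : 0 <= (if m == m1 then X else 0) + (if m == m2 then Y else 0).
    by rewrite addr_ge0 //; case: ifP.
  move: RHS0; case: (ltngtP m m1) => [hlt|hgt|em1] RHS0.
  + exact: (le_trans (bnd_lt _ hlt) RHS0).
  + move: RHS0; case: (ltngtP m m2) => [hlt2|hgt2|e2] RHS0.
    * exact: (le_trans (bnd_mid _ hgt hlt2) RHS0).
    * exact: (le_trans (bnd_gt _ hgt2 hm) RHS0).
    * rewrite e2 /=; apply: (le_trans bnd_2); rewrite ?add0r //.
  + rewrite em1 /=; apply: (le_trans bnd_eq); rewrite lerDl; by case: ifP.
- have bnd_gt m : (m1 < m)%N -> (m < 9)%N -> Dchi2 (b (8 + m)%N) (hmid b (8 + m)%N) <= 0.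
    move=> h1 hm; apply: term_one; [exact: (hi _ hm)|exact: (hin _ hm)| |by []].
    move=> x /(two _ _ h1 hm) [e [f [[[-> ->]|[-> ->]] [_ ->]]]].
      by rewrite hb //; ring.
    case: (eqVneq (v1 m) (b (8 + m)%N)) => [<- //|hne].
    by exfalso; apply: hno2; exists m; rewrite h1 hm hne.
  apply: le_trans (_ : \sum_(m < 9) (if (m : nat) == m1 then X else 0) <= _); last first.
    by rewrite sum_if // -XY lerDl.
  apply: ler_sum => -[m hm] _ /=.
  case: (ltngtP m m1) => [hlt|hgt|em1].
  + exact: (bnd_lt _ hlt).
  + exact: (bnd_gt _ hgt hm).
  + by rewrite em1.
Qed.

End F.

Ltac nat_entries X :=
  let g := fresh "g" in let h := fresh "h" in let Ag := fresh "Ag" in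
  pose g := (fun i j : nat => X (inord i) (inord j));
  pose h := (fun i j : nat => X (inord i) (inord j));
  have Ag : forall i j, X i j = g i j by (move=> i j; rewrite /g !inord_val);
  rewrite !Ag;
  repeat match goal with |- context [g ?i ?j] =>
    let i' := eval vm_compute in i in let j' := eval vm_compute in j in
    change (g i j) with (h i' j') end;
  rewrite /h; clear Ag h g.

Lemma bump00 : bump 0 0 = 1%N. Proof. by []. Qed.
Lemma bump01 : bump 0 1 = 2%N. Proof. by []. Qed.

Section G.
Variable R : realType.
Local Open Scope classical_set_scope.

Definition ucol (mu : R) : 'cV[R]_3 := \col_(j < 3) (if j == 0 :> nat then mu else 0).
Definition Aof (O1 O2 : 'M[R]_3) (j k : nat) :=
  O1 (inord j) 0 * O2 (inord k) 0.
Definition Pof (O1 O2 : 'M[R]_3) (j k : nat) :=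
  O1 (inord j) 1 * O2 (inord k) 1 - O1 (inord j) 2 * O2 (inord k) 2.
Definition Qof (O1 O2 : 'M[R]_3) (j k : nat) :=
  O1 (inord j) 1 * O2 (inord k) 2 + O1 (inord j) 2 * O2 (inord k) 1.

Lemma mulmx3E m n (A : 'M[R]_(m, 3)) (B : 'M[R]_(3, n)) i j :
  (A *m B) i j = A i 0 * B 0 j + A i 1 * B 1 j + A i 2 * B 2 j.
Proof.
rewrite mxE !big_ord_recl big_ord0 addr0 addrA.
have -> : lift ord0 ord0 = 1 :> 'I_3 by apply: val_inj.
by have -> : lift ord0 (lift ord0 ord0) = 2 :> 'I_3 by apply: val_inj.
Qed.

Lemma ucolE mu : [/\ ucol mu 0 0 = mu, ucol mu 1 0 = 0 & ucol mu 2 0 = 0].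
Proof. by rewrite !mxE. Qed.

Lemma Char (O1 O2 : 'M[R]_3) (mu s : R) (v : st R) :
  O1^T *m O1 = 1%:M -> O2^T *m O2 = 1%:M -> \det O1 = 1 -> \det O2 = 1 ->
  mu != 0 -> mu ^+ 2 + s ^+ 2 = 1 -> bc v 1 = 1 ->
  alc v = O1 *m ucol mu -> bec v = O2 *m ucol mu ->
  exists e f, e ^+ 2 + f ^+ 2 = s ^+ 2 /\ forall j k, (j < 3)%N -> (k < 3)%N ->
    cc v j k = Aof O1 O2 j k + e * Pof O1 O2 j k + f * Qof O1 O2 j k.
Proof.
move=> O1l O2l d1 d2 mu0 hms hn hal hbe.
have asqE : asq v = mu ^+ 2.
  have : (alc v)^T *m alc v = (ucol mu)^T *m ucol mu.
    by rewrite hal trmx_mul -mulmxA (mulmxA O1^T) O1l mul1mx.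
  move/(congr1 (fun M : 'M[R]_1 => M 0 0)); rewrite !mxE !big_ord_recl !big_ord0 !mxE /=.
  rewrite !bump00 !bump01 /asq !expr2 !mul0r !addr0 addrA => -> //.
have s2 : 1 - asq v = s ^+ 2 by rewrite asqE; lra.
have F1 : Cm v *m bec v = alc v by rewrite id_Cbe hn scale1r.
have F2 : (Cm v)^T *m alc v = bec v by rewrite id_CTal hn scale1r.
have F3 : Cm v *m (Cm v)^T = (s ^+ 2)%:M + alc v *m (alc v)^T.
  by rewrite id_CCT hn expr1n s2.
have F4 : \det (Cm v) = - s ^+ 2 by rewrite id_det hn expr1n s2 mulr1.
have O1r : O1 *m O1^T = 1%:M by apply: mulmx1C.
have O2r : O2 *m O2^T = 1%:M by apply: mulmx1C.
set X := O1^T *m Cm v *m O2.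
have HX1 : X *m ucol mu = ucol mu.
  by rewrite /X -!mulmxA -hbe F1 hal mulmxA O1l mul1mx.
have HX2 : X^T *m ucol mu = ucol mu.
  rewrite /X !trmx_mul trmxK -!mulmxA -hal F2 hbe mulmxA O2l mul1mx //.
have HX3 : X *m X^T = (s ^+ 2)%:M + ucol mu *m (ucol mu)^T.
  rewrite /X !trmx_mul trmxK !mulmxA -(mulmxA _ O2) O2r mulmx1 -(mulmxA _ (Cm v)) F3.
  rewrite mulmxDr mulmxDl hal trmx_mul !mulmxA O1l mul1mx.
  rewrite -[_ *m O1^T *m O1]mulmxA O1l mulmx1.
  by rewrite mul_mx_scalar -scalemxAl O1l scalemx1.
have HX4 : \det X = - s ^+ 2.
  by rewrite /X !det_mulmx det_tr d1 d2 F4 mul1r mulr1.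
have HC : Cm v = O1 *m X *m O2^T.
  by rewrite /X !mulmxA O1r mul1mx -mulmxA O2r mulmx1.
clearbody X.
have ent1 i : X i 0 * mu = ucol mu i 0.
  by have := congr1 (fun M : 'cV[R]_3 => M i 0) HX1; rewrite mulmx3E; case: (ucolE mu) => h0 h1 h2; rewrite h0 h1 h2; rewrite !mulr0 !addr0.
have ent2 i : X 0 i * mu = ucol mu i 0.
  by have := congr1 (fun M : 'cV[R]_3 => M i 0) HX2; rewrite mulmx3E; case: (ucolE mu) => h0 h1 h2; rewrite h0 h1 h2 !mxE; rewrite !mulr0 !addr0.
case: (ucolE mu) => u0 u1 u2.
have x00 : X 0 0 = 1 by apply: (mulIf mu0); rewrite ent1 u0 mul1r.
have x10 : X 1 0 = 0 by apply: (mulIf mu0); rewrite ent1 u1 mul0r.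
have x20 : X 2 0 = 0 by apply: (mulIf mu0); rewrite ent1 u2 mul0r.
have x01 : X 0 1 = 0 by apply: (mulIf mu0); rewrite ent2 u1 mul0r.
have x02 : X 0 2 = 0 by apply: (mulIf mu0); rewrite ent2 u2 mul0r.
have n11 : X 1 1 ^+ 2 + X 1 2 ^+ 2 = s ^+ 2.
  have := congr1 (fun M : 'M[R]_3 => M 1 1) HX3.
  rewrite mulmx3E !mxE big_ord1 !mxE /= x10 ?mulr1n ?mulr0n !expr2; lra.
have n22 : X 2 1 ^+ 2 + X 2 2 ^+ 2 = s ^+ 2.
  have := congr1 (fun M : 'M[R]_3 => M 2 2) HX3.
  rewrite mulmx3E !mxE big_ord1 !mxE /= x20 ?mulr1n ?mulr0n !expr2; lra.
have n12 : X 1 1 * X 2 1 + X 1 2 * X 2 2 = 0.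
  have := congr1 (fun M : 'M[R]_3 => M 1 2) HX3.
  rewrite mulmx3E !mxE big_ord1 !mxE /= x10 x20 ?mulr1n ?mulr0n; lra.
have hdet : X 1 1 * X 2 2 - X 1 2 * X 2 1 = - s ^+ 2.
  by have := HX4; rewrite det33 x00 x01 x02 !mul0r !subr0 !addr0 mul1r.
have x21 : X 2 1 = X 1 2 /\ X 2 2 = - X 1 1.
  have h0 : (X 2 1 - X 1 2) ^+ 2 + (X 2 2 + X 1 1) ^+ 2 = 0.
    transitivity ((X 1 1 ^+ 2 + X 1 2 ^+ 2) + (X 2 1 ^+ 2 + X 2 2 ^+ 2)
       + 2 * (X 1 1 * X 2 2 - X 1 2 * X 2 1)); first by ring.
    by rewrite n11 n22 hdet; ring.
  have := sqr_ge0 (X 2 1 - X 1 2); have := sqr_ge0 (X 2 2 + X 1 1).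
  move=> p1 p2; split.
    have : (X 2 1 - X 1 2) ^+ 2 = 0 by lra.
    by move/eqP; rewrite sqrf_eq0 subr_eq0 => /eqP.
  have : (X 2 2 + X 1 1) ^+ 2 = 0 by lra.
  by move/eqP; rewrite sqrf_eq0 addr_eq0 => /eqP.
case: x21 => x21 x22.
exists (X 1 1), (X 1 2); split => // j k hj hk.
have -> : cc v j k = Cm v (inord j) (inord k) by rewrite mxE !inordK.
rewrite HC mulmx3E !mulmx3E !mxE x00 x01 x02 x10 x20 x21 x22 /Aof /Pof /Qof.
ring.
Qed.

End G.

Lemma sum17 (R : nzRingType) (F : nat -> R) : \sum_(2 <= i < 17) F i =
  F 2%N + F 3%N + F 4%N + F 5%N + F 6%N + F 7%N + \sum_(m < 9) F (8 + m)%N.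
Proof.
rewrite (big_cat_nat _ (n := 8)) //.
rewrite big_ltn // big_ltn // big_ltn // big_ltn // big_ltn // big_ltn // big_geq // /= addr0.
rewrite !addrA; congr (_ + _).
rewrite (big_addn 0 17 8) big_mkord; apply: eq_bigr => i _; rewrite addnC //.
Qed.

Section H.
Variable R : realType.
Local Open Scope classical_set_scope.

Lemma id_CTal_s (v : st R) (k : nat) : (k < 3)%N ->
  cc v 0 k * al v 0 + cc v 1 k * al v 1 + cc v 2 k * al v 2 = bc v 1 * be v k.
Proof. case: k => [|[|[|//]]] _; rewrite /cc /al /be; case: v => * /=; ring. Qed.

Lemma rowbound (x1 x2 x3 y1 y2 y3 : R) :
  x1 ^+ 2 + x2 ^+ 2 + x3 ^+ 2 = 1 -> y1 ^+ 2 + y2 ^+ 2 + y3 ^+ 2 = 1 ->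
  `|x1 * y1| <= 1 /\
  (x2 * y2 - x3 * y3) ^+ 2 + (x2 * y3 + x3 * y2) ^+ 2 <= (1 - `|x1 * y1|) ^+ 2.
Proof.
move=> hx hy.
have ex : (x2 * y2 - x3 * y3) ^+ 2 + (x2 * y3 + x3 * y2) ^+ 2 =
  (1 - `|x1| ^+ 2) * (1 - `|y1| ^+ 2).
  have hx' : 1 - x1 ^+ 2 = x2 ^+ 2 + x3 ^+ 2 by lra.
  have hy' : 1 - y1 ^+ 2 = y2 ^+ 2 + y3 ^+ 2 by lra.
  rewrite !sqr_abs hx' hy'; ring.
have a0 := normr_ge0 x1; have c0 := normr_ge0 y1.
have a1 : `|x1| ^+ 2 <= 1 by rewrite sqr_abs -hx; have := sqr_ge0 x2; have := sqr_ge0 x3; lra.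
have c1 : `|y1| ^+ 2 <= 1 by rewrite sqr_abs -hy; have := sqr_ge0 y2; have := sqr_ge0 y3; lra.
have a1' : `|x1| <= 1 by nra.
have c1' : `|y1| <= 1 by nra.
rewrite normrM ex; split; first by nra.
have := sqr_ge0 (`|x1| - `|y1|); nra.
Qed.

Lemma sym_term (b : nat -> R) (f : st R -> st R) (i : nat) : sym_at f i -> (2 <= i <= 16)%N ->
  cond_values b i (b i) -> Dchi2 (b i) (hmid b i) <= b i ^+ 2.
Proof.
move=> hf hi hbi; apply: (term_bound (a := 0)) => //.
- move=> x /(condE _ _ hi) [v [hn [hk ->]]]; apply/(condE _ _ hi).
  have [h1 h2] := hf v; exists (f v); split.
    by rewrite h1 //; apply/andP; split => //; case/andP: hi.
  split; first by move=> k hk'; rewrite h1 ?hk //; case/andP: hk' => ? ?; apply/andP; split.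
  by rewrite h2 mulr0 sub0r.
- exact: sqr_ge0.
- by move=> _; rewrite subr0 expr0n /= subr0 divr1.
Qed.

End H.

Unset Implicit Arguments. Set Strict Implicit.


Theorem lemma5 (R : realType) (rho : 'M[R[i]]_(2 * 2)) (theta : R)
    (O1 O2 : 'M[R]_3) :
  pure2 rho ->
  0 <= theta <= pi / 2 ->
  SO3 O1 -> SO3 O2 ->
  0 < `|cos theta| < 1 ->
  (\col_(j < 3) bloch rho (j + 2)%N) =
    O1 *m (\col_(j < 3) (if j == 0 :> nat then cos theta else 0)) ->
  (\col_(j < 3) bloch rho (j + 5)%N) =
    O2 *m (\col_(j < 3) (if j == 0 :> nat then cos theta else 0)) ->
  (\matrix_(j < 3, k < 3) bloch rho (8 + 3 * j + k)%N) =
    O1 *m diag_mx (\row_(j < 3)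
      (if j == 0 :> nat then 1 else if j == 1 :> nat then sin theta
       else - sin theta)) *m O2^T ->
  Ipost (bloch rho) < 2.
Proof.
move=> [psi [hpsi erho]] /andP[th0 th1] [O1l d1] [O2l d2] /andP[hmu0 hmu1] Hal Hbe HC.
set b := bloch rho in Hal Hbe HC *.
set v0 := st_of psi.
have hb k : (1 <= k <= 16)%N -> b k = bc v0 k by move=> hk; rewrite /b erho bloch_st.
have hn0 : bc v0 1 = 1 by exact: norm_st.
have hb1 : b 1 = 1 by rewrite hb.
clearbody b.
set mu := cos theta in hmu0 hmu1 Hal Hbe.
set s := sin theta in HC.
have hms : mu ^+ 2 + s ^+ 2 = 1 by exact: cos2Dsin2.
have s0 : 0 <= s.
  apply: sin_ge0_pi; rewrite th0 /=; apply: (le_trans th1).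
  have := pi_gt0 R; lra.
have s1 : s <= 1 by have := sqr_ge0 mu; nra.
have mu0 : mu != 0 by rewrite -normr_gt0.
have mu2 : mu ^+ 2 < 1.
  rewrite -sqr_abs; have := normr_ge0 mu; nra.
have O1r : O1 *m O1^T = 1%:M by apply: mulmx1C.
have O2r : O2 *m O2^T = 1%:M by apply: mulmx1C.
have halv : alc v0 = O1 *m ucol mu.
  rewrite -Hal; apply/matrixP => i j; rewrite !mxE hb //.
  by apply/andP; split; move: (ltn_ord i); clear; lia.
have hbev : bec v0 = O2 *m ucol mu.
  rewrite -Hbe; apply/matrixP => i j; rewrite !mxE hb //.
  by apply/andP; split; move: (ltn_ord i); clear; lia.
have hal j : (j < 3)%N -> b (j + 2)%N = O1 (inord j) 0 * mu.
  move=> hj; have := congr1 (fun M : 'cV[R]_3 => M (inord j) 0) Hal.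
  rewrite mxE inordK // => ->; rewrite mulmx3E; case: (ucolE mu) => u0 u1 u2.
  by rewrite u0 u1 u2 !mulr0 !addr0.
have hbe j : (j < 3)%N -> b (j + 5)%N = O2 (inord j) 0 * mu.
  move=> hj; have := congr1 (fun M : 'cV[R]_3 => M (inord j) 0) Hbe.
  rewrite mxE inordK // => ->; rewrite mulmx3E; case: (ucolE mu) => u0 u1 u2.
  by rewrite u0 u1 u2 !mulr0 !addr0.
have hCC j k : (j < 3)%N -> (k < 3)%N -> b (8 + 3 * j + k)%N = Aof O1 O2 j k + s * Pof O1 O2 j k.
  move=> hj hk; have := congr1 (fun M : 'M[R]_3 => M (inord j) (inord k)) HC.
  rewrite mxE !inordK // => ->; rewrite !mulmx3E !mxE /= /Aof /Pof; ring.
have i0 : inord 0 = 0 :> 'I_3 by apply: val_inj; rewrite /= inordK.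
have i1 : inord 1 = 1 :> 'I_3 by apply: val_inj; rewrite /= inordK.
have i2 : inord 2 = 2 :> 'I_3 by apply: val_inj; rewrite /= inordK.
have cn1 : O1 (inord 0) 0 ^+ 2 + O1 (inord 1) 0 ^+ 2 + O1 (inord 2) 0 ^+ 2 = 1.
  have := congr1 (fun M : 'M[R]_3 => M 0 0) O1l; rewrite mulmx3E !mxE /= i0 i1 i2 !expr2 => ->.
  by rewrite mulr1n.
have cn2 : O2 (inord 0) 0 ^+ 2 + O2 (inord 1) 0 ^+ 2 + O2 (inord 2) 0 ^+ 2 = 1.
  have := congr1 (fun M : 'M[R]_3 => M 0 0) O2l; rewrite mulmx3E !mxE /= i0 i1 i2 !expr2 => ->.
  by rewrite mulr1n.
have rn1 j : O1 j 0 ^+ 2 + O1 j 1 ^+ 2 + O1 j 2 ^+ 2 = 1.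
  have := congr1 (fun M : 'M[R]_3 => M j j) O1r; rewrite mulmx3E !mxE eqxx !expr2 => ->.
  by rewrite mulr1n.
have rn2 j : O2 j 0 ^+ 2 + O2 j 1 ^+ 2 + O2 j 2 ^+ 2 = 1.
  have := congr1 (fun M : 'M[R]_3 => M j j) O2r; rewrite mulmx3E !mxE eqxx !expr2 => ->.
  by rewrite mulr1n.
have colE (O : 'M[R]_3) i : (O *m ucol mu) i 0 = O i 0 * mu.
  by rewrite mulmx3E; case: (ucolE mu) => u0 u1 u2; rewrite u0 u1 u2 !mulr0 !addr0.
pose n (j : nat) := O1 (inord j) 0.
have charv (v : st R) : bc v 1 = 1 -> (forall j, (j < 3)%N -> al v j = n j * mu) ->
    (forall j, (j < 3)%N -> be v j = O2 (inord j) 0 * mu) ->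
    exists e f, e ^+ 2 + f ^+ 2 = s ^+ 2 /\ forall j k, (j < 3)%N -> (k < 3)%N ->
    cc v j k = Aof O1 O2 j k + e * Pof O1 O2 j k + f * Qof O1 O2 j k.
  move=> hn ha hbb; apply: (Char O1l O2l d1 d2 mu0 hms hn).
    apply/matrixP => i j; rewrite !ord1 colE mxE ha // /n inord_val //.
  apply/matrixP => i j; rewrite !ord1 colE mxE hbb // inord_val //.
have alE (v : st R) m : (forall k, (1 <= k < 8 + m)%N -> bc v k = b k) ->
    forall j, (j < 3)%N -> al v j = n j * mu.
  move=> hk j hj; rewrite /al hk ?hal //; apply/andP; split; clear -hj; lia.
have beE (v : st R) m : (forall k, (1 <= k < 8 + m)%N -> bc v k = b k) ->
    forall j, (j < 3)%N -> be v j = O2 (inord j) 0 * mu.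
  move=> hk j hj; rewrite /be hk ?hbe //; apply/andP; split; clear -hj; lia.
pose A m := Aof O1 O2 (m %/ 3) (m %% 3).
pose P m := Pof O1 O2 (m %/ 3) (m %% 3).
pose Q m := Qof O1 O2 (m %/ 3) (m %% 3).
have hdm m : (m < 9)%N -> [/\ (m %/ 3 < 3)%N, (m %% 3 < 3)%N & (8 + 3 * (m %/ 3) + m %% 3 = 8 + m)%N].
  by move=> hm; split; clear -hm; lia.
have hi8 m : (m < 9)%N -> (2 <= 8 + m <= 16)%N by move=> hm; apply/andP; split; clear -hm; lia.
have key : \sum_(m < 9) Dchi2 (b (8 + m)%N) (hmid b (8 + m)%N) <= s ^+ 2.
  apply: (Cpart (A := A) (P := P) (Q := Q)).
  - by rewrite s0 s1.
  - move=> m hm; apply: rowbound; [exact: rn1 | exact: rn2].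
  - by move=> m hm; case: (hdm m hm) => hj hk he; rewrite -he hCC.
  - move=> m hm; apply/(condE _ _ (hi8 m hm)); exists v0; split => //; split.
      by move=> k /andP[k1 k2]; rewrite hb // k1 /=; clear -k2 hm; lia.
    by rewrite hb // hi8.
  - move=> m x hm /(condE _ _ (hi8 m hm)) [v [hn [hk ->]]].
    have [e [f [hef hcc]]] := charv v hn (alE v m hk) (beE v m hk).
    exists e, f; split => //; split.
      move=> m' hm'; have hm9 : (m' < 9)%N by clear -hm hm'; lia.
      case: (hdm m' hm9) => hj hk' he; rewrite -hk; last by apply/andP; split; clear -hm'; lia.
      by rewrite -he; exact: (esym (hcc _ _ hj hk')).
    by case: (hdm m hm) => hj hk' he; rewrite -he; exact: (hcc _ _ hj hk').
  - move=> m x hm /(condE _ _ (hi8 m hm)) [v [hn [hk ->]]] hz.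
    have hn2 : n 0%N ^+ 2 + n 1%N ^+ 2 + n 2%N ^+ 2 = 1 by exact: cn1.
    case: (rotn_eff v hn2) => r1 r2 r3 r4.
    have al' j : (j < 3)%N -> al (rotn n v) j = n j * mu.
      move=> hj; rewrite r2 // !(alE v m hk) //.
      have -> : n 0%N * (n 0%N * mu) + n 1%N * (n 1%N * mu) + n 2%N * (n 2%N * mu)
         = mu * (n 0%N ^+ 2 + n 1%N ^+ 2 + n 2%N ^+ 2) by ring.
      by rewrite hn2 mulr1; ring.
    have be' j : (j < 3)%N -> be (rotn n v) j = O2 (inord j) 0 * mu.
      by move=> hj; rewrite r3 // (beE v m hk).
    have hn' : bc (rotn n v) 1 = 1 by rewrite r1.
    have [e' [f' [_ hcc']]] := charv _ hn' al' be'.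
    apply/(condE _ _ (hi8 m hm)); exists (rotn n v); split => //; split.
    + move=> k /andP[k1 k2].
      case: (leqP k 1) => hk1.
        have -> : k = 1%N by clear -k1 hk1; lia.
        by rewrite hn' hb1.
      case: (leqP k 4) => hk4.
        have -> : k = ((k - 2) + 2)%N by clear -hk1 hk4; lia.
        by rewrite -/(al (rotn n v) (k - 2)) al' ?hal //; clear -hk1 hk4; lia.
      case: (leqP k 7) => hk7.
        have -> : k = ((k - 5) + 5)%N by clear -hk4 hk7; lia.
        by rewrite -/(be (rotn n v) (k - 5)) be' ?hbe //; clear -hk4 hk7; lia.
      have hm' : (k - 8 < m)%N by clear -k2 hk7; lia.
      have hm9 : (k - 8 < 9)%N by clear -hm hm'; lia.
      case: (hdm _ hm9) => hj hk' he.
      have -> : k = (8 + 3 * ((k - 8) %/ 3) + (k - 8) %% 3)%N by rewrite he; clear -hk7; lia.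
      rewrite -/(cc (rotn n v) ((k - 8) %/ 3) ((k - 8) %% 3)) hcc' // hCC //.
      have [Pz Qz] := hz _ hm'.
      have Pz' : Pof O1 O2 ((k - 8) %/ 3) ((k - 8) %% 3) = 0 := Pz.
      have Qz' : Qof O1 O2 ((k - 8) %/ 3) ((k - 8) %% 3) = 0 := Qz.
      by rewrite Pz' Qz' !mulr0 !addr0.
    + case: (hdm m hm) => hj hk3 he.
      rewrite -he -/(cc (rotn n v) (m %/ 3) (m %% 3)) -/(cc v (m %/ 3) (m %% 3)) r4 //.
      have hs := id_CTal_s v hk3.
      rewrite hn mul1r !(alE v m hk) // (beE v m hk) // in hs.
      have hsum : n 0%N * cc v 0 (m %% 3) + n 1%N * cc v 1 (m %% 3) + n 2%N * cc v 2 (m %% 3)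
          = O2 (inord (m %% 3)) 0.
        apply: (mulIf mu0); rewrite -hs; ring.
      by rewrite hsum /A /Aof /n mulrA.
have inS i : (2 <= i <= 16)%N -> cond_values b i (b i).
  move=> hi; apply/(condE _ _ hi); exists v0; split => //; split.
    move=> k /andP[k1 k2]; rewrite hb // k1 /=; case/andP: hi => _ hi.
    by clear -k2 hi; lia.
  by rewrite hb //; case/andP: hi => hi1 hi2; rewrite hi2 andbT; clear -hi1; lia.
have D2 : Dchi2 (b 2%N) (hmid b 2) <= b 2%N ^+ 2 := sym_term (@flA_sym R) isT (inS 2%N isT).
have D3 : Dchi2 (b 3%N) (hmid b 3) <= b 3%N ^+ 2 := sym_term (@swA_sym R) isT (inS 3%N isT).
have D4 : Dchi2 (b 4%N) (hmid b 4) <= b 4%N ^+ 2 := sym_term (@cjA_sym R) isT (inS 4%N isT).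
have D5 : Dchi2 (b 5%N) (hmid b 5) <= b 5%N ^+ 2 := sym_term (@flB_sym R) isT (inS 5%N isT).
have D6 : Dchi2 (b 6%N) (hmid b 6) <= b 6%N ^+ 2 := sym_term (@swB_sym R) isT (inS 6%N isT).
have ha2 : b 2%N = n 0%N * mu := hal 0%N isT.
have ha3 : b 3%N = n 1%N * mu := hal 1%N isT.
have ha4 : b 4%N = n 2%N * mu := hal 2%N isT.
have hb5 : b 5%N = O2 (inord 0) 0 * mu := hbe 0%N isT.
have hb6 : b 6%N = O2 (inord 1) 0 * mu := hbe 1%N isT.
have hb7 : b 7%N = O2 (inord 2) 0 * mu := hbe 2%N isT.
have sumA : b 2%N ^+ 2 + b 3%N ^+ 2 + b 4%N ^+ 2 = mu ^+ 2.
  rewrite ha2 ha3 ha4 !exprMn -!mulrDl.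
  by have := cn1; rewrite /n => ->; rewrite mul1r.
have sumB : b 5%N ^+ 2 + b 6%N ^+ 2 + b 7%N ^+ 2 = mu ^+ 2.
  rewrite hb5 hb6 hb7 !exprMn -!mulrDl.
  by rewrite cn2 mul1r.
have D7 : Dchi2 (b 7%N) (hmid b 7) <= b 7%N ^+ 2.
  apply: (term_two (c := - b 7%N)); [exact: isT | exact: (inS 7%N isT) | | exact: sqr_ge0 |].
    move=> x /(condE _ _ (isT : (2 <= 7 <= 16)%N)) [v [hn [hk ->]]].
    have e7 : bc v 7 ^+ 2 = b 7%N ^+ 2.
      have al0 : al v 0 = b 2%N := hk 2%N isT.
      have al1 : al v 1 = b 3%N := hk 3%N isT.
      have al2 : al v 2 = b 4%N := hk 4%N isT.
      have be0 : be v 0 = b 5%N := hk 5%N isT.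
      have be1 : be v 1 = b 6%N := hk 6%N isT.
      have h := id_norm v; rewrite /asq al0 al1 al2 be0 be1 in h.
      have e : be v 2 = bc v 7 by [].
      rewrite -e; apply: (addrI (b 5%N ^+ 2 + b 6%N ^+ 2)); rewrite h sumA -sumB //.
    move/eqP: e7; rewrite eqf_sqr => /orP[/eqP->|/eqP->]; [by left | by right].
  move=> _ _; have -> : (b 7%N + - b 7%N) / 2 = 0 by rewrite subrr mul0r.
  by rewrite subr0 [0 ^+ 2]expr2 mul0r subr0 divr1.
have split17 : Ipost b = Dchi2 (b 2%N) (hmid b 2) + Dchi2 (b 3%N) (hmid b 3)
   + Dchi2 (b 4%N) (hmid b 4) + Dchi2 (b 5%N) (hmid b 5) + Dchi2 (b 6%N) (hmid b 6)
   + Dchi2 (b 7%N) (hmid b 7) + \sum_(m < 9) Dchi2 (b (8 + m)%N) (hmid b (8 + m)%N).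
  by rewrite /Ipost sum17.
rewrite split17.
apply: (le_lt_trans (y := b 2%N ^+ 2 + b 3%N ^+ 2 + b 4%N ^+ 2 + b 5%N ^+ 2 + b 6%N ^+ 2
   + b 7%N ^+ 2 + s ^+ 2)).
  by apply: lerD => //; apply: lerD => //; apply: lerD => //; apply: lerD => //;
     apply: lerD => //; apply: lerD => //.
by clear -sumA sumB hms mu2; lra.
Qed.
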